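(* Let $N\ge 2$ and let $A_1,\dots,A_N$ be distinct Boolean variables. Then $$A_1\vee A_2\vee\dots\vee A_N=(A_1<(A_2<\cdots(A_N<1)\cdots))<1$$ as Boolean functions, and this right-hand side, which contains exactly two occurrences of the constant $1$ and exactly one occurrence of each variable $A_i$, is a minimal $(<,1)$-representation of $A_1\vee\dots\vee A_N$, i.e. no $(<,1)$-expression representing $A_1\vee\dots\vee A_N$ uses fewer occurrences of the operation $<$.
   Context: The binary Boolean operation $<$ (Strict Boolean Inequality) is defined by $A<B=(\neg A)\wedge B$, i.e. $A<B=1$ iff $A=0$ and $B=1$. A $(<,1)$-representation (or $(<,1)$-expression) of a Boolean function of variables $A_1,\dots,A_N$ is a formula built from the variables $A_1,\dots,A_N$ and the constant $1$ using only the binary operation $<$, which computes that function; its cost is the number of occurrences of $<$ (number of gates), and a representation is minimal if no representation of the same function has smaller cost. *)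

(* Defs.v *)
From mathcomp Require Import all_boot.
Set Implicit Arguments. Unset Strict Implicit. Unset Printing Implicit Defensive.

(* (<,1)-expressions over the variables A_0,...,A_{N-1} (indexed by 'I_N) *)
Inductive ltexpr (N : nat) : Type :=
| LVar : 'I_N -> ltexpr N
| LOne : ltexpr N
| LLt : ltexpr N -> ltexpr N -> ltexpr N.

Arguments LOne {N}.

(* strict Boolean inequality: A < B = (~A) /\ B *)
Definition sbi (a b : bool) : bool := ~~ a && b.

Fixpoint eval_lt N (v : 'I_N -> bool) (e : ltexpr N) : bool :=
  match e with
  | LVar i => v i
  | LOne => true
  | LLt e1 e2 => sbi (eval_lt v e1) (eval_lt v e2)
  end.

Fixpoint cost N (e : ltexpr N) : nat :=
  match e with
  | LVar _ => 0
  | LOne => 0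
  | LLt e1 e2 => (cost e1 + cost e2).+1
  end.

Fixpoint ones N (e : ltexpr N) : nat :=
  match e with
  | LVar _ => 0
  | LOne => 1
  | LLt e1 e2 => ones e1 + ones e2
  end.

Fixpoint var_occ N (i : 'I_N) (e : ltexpr N) : nat :=
  match e with
  | LVar j => (j == i)
  | LOne => 0
  | LLt e1 e2 => var_occ i e1 + var_occ i e2
  end.

Definition represents N (e : ltexpr N) (f : ('I_N -> bool) -> bool) : Prop :=
  forall v, eval_lt v e = f v.

Definition big_or N (v : 'I_N -> bool) : bool := [exists i, v i].

Definition or_repr N : ltexpr N :=
  LLt (foldr (fun i acc => LLt (LVar i) acc) LOne (enum 'I_N)) LOne.

(* Main.v *)
Require Import Defs.
From mathcomp Require Import all_boot.
From mathcomp Require Import zify.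
Set Implicit Arguments. Unset Strict Implicit.

Section Aux.
Variable N : nat.

Definition chain (s : seq 'I_N) : ltexpr N :=
  foldr (fun i acc => LLt (LVar i) acc) LOne s.

Lemma chain_cost s : cost (chain s) = size s.
Proof. by elim: s => //= a s ->; rewrite add0n. Qed.
Lemma chain_ones s : ones (chain s) = 1.
Proof. by elim: s. Qed.
Lemma chain_occ i s : var_occ i (chain s) = count_mem i s.
Proof. by elim: s => //= a s ->; rewrite eq_sym. Qed.
Lemma chain_eval v s : eval_lt v (chain s) = all (fun i => ~~ v i) s.
Proof. by elim: s => //= a s ->. Qed.

Definition v0 : 'I_N -> bool := fun _ => false.

Lemma onefree (e : ltexpr N) : ones e = 0 -> eval_lt v0 e = false.
Proof.
elim: e => //= e1 _ e2 IH2 H.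
have Z : ones e2 = 0 by lia.
by rewrite /sbi IH2 // andbF.
Qed.

Lemma key (e : ltexpr N) : ones e <= 1 ->
  eval_lt v0 e = true \/ exists j, forall v, eval_lt v e -> v j.
Proof.
elim: e => [j|| e1 IH1 e2 IH2] /=; first by right; exists j.
  by left.
move=> H.
have H2 : ones e2 <= 1 by lia.
case: (IH2 H2) => [E2|[j Hj]].
  left. case: (ones e2 =P 0) => Z; first by rewrite onefree in E2.
  have Z1 : ones e1 = 0 by lia.
  by rewrite /sbi onefree // E2.
right; exists j => v; rewrite /sbi => /andP[_]; exact: Hj.
Qed.

Lemma occ_indep (e : ltexpr N) (i : 'I_N) (b : bool) (v : 'I_N -> bool) : var_occ i e = 0 ->
  eval_lt v e = eval_lt (fun k => if k == i then b else v k) e.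
Proof.
elim: e => [j|| e1 IH1 e2 IH2] /=.
- by case: (j =P i) => //= _ _; rewrite ifF //; apply/eqP => E; move: E => /eqP ->.
- by [].
- move=> H. rewrite IH1 ?IH2 //; lia.
Qed.

Lemma cost_count (e : ltexpr N) : (cost e).+1 = ones e + \sum_(i < N) var_occ i e.
Proof.
elim: e => [j|| e1 IH1 e2 IH2] /=.
- rewrite (bigD1 j) //= eqxx big1 //; last by move=> k /negPf; rewrite eq_sym => ->.
- by rewrite big1.
- rewrite big_split /=. by rewrite addnACA -IH1 -IH2 addSn addnS.
Qed.
End Aux.

Theorem mainTheorem3 (N : nat) (hN : 2 <= N) :
  represents (or_repr N) (@big_or N)
  /\ ones (or_repr N) = 2
  /\ (forall i : 'I_N, var_occ i (or_repr N) = 1)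
  /\ (forall e : ltexpr N, represents e (@big_or N) -> cost (or_repr N) <= cost e).
Proof.
have R : or_repr N = LLt (chain (enum 'I_N)) LOne by [].
split; [|split; [|split]].
- move=> v; rewrite R /= chain_eval /sbi andbT /big_or.
  rewrite -has_predC; apply/hasP/existsP => [[x _ /negPn Hx]|[x Hx]]; first by exists x.
  by exists x; rewrite ?mem_enum /= ?Hx.
- by rewrite R /= chain_ones.
- move=> i; rewrite R /= chain_occ addn0.
  by rewrite count_uniq_mem ?enum_uniq // mem_enum.
- move=> e He.
  rewrite R /= chain_cost addn0 size_enum_ord.
  have Hones : 2 <= ones e.
    case: (leqP (ones e) 1) => // H1.
    case: (key H1) => [E|[j Hj]].
      by move: (He (@v0 N)); rewrite E /big_or => /esym/existsP[x].
    pose k : 'I_N := if val j == 0 then Ordinal (hN : 1 < N)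
                     else Ordinal (leq_trans (isT : 0 < 2) hN).
    have kj : k != j.
      rewrite /k; case: (val j =P 0) => Hj0; apply/eqP => E;
      move: Hj0; rewrite -E //=.
    have := Hj (fun x => x == k); rewrite He /big_or.
    have -> : [exists i, i == k] by apply/existsP; exists k.
    by move=> /(_ isT); rewrite eq_sym (negPf kj).
  have Hocc : forall i, 1 <= var_occ i e.
    move=> i; case: (leqP 1 (var_occ i e)) => // H0.
    have Z : var_occ i e = 0 by lia.
    have := occ_indep true (@v0 N) Z.
    rewrite !He /big_or.
    have -> : [exists k, (fun k => if k == i then true else @v0 N k) k].
      by apply/existsP; exists i; rewrite eqxx.
    by move=> /existsP[x].
  have S : N <= \sum_(i < N) var_occ i e.
    have := @leq_sum _ (index_enum 'I_N) xpredT (fun _ => 1) (fun i => var_occ i e) (fun i _ => Hocc i).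
    by rewrite sum_nat_const card_ord muln1.
  have := cost_count e. lia.
Qed.
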